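(* Let $h:\omega\to\omega$ satisfy $1<h(n)<\omega$ for all $n$. Then $\mathbb{PT}_h$ is Cohen preserving.
   Context: $\mathbb{PT}_h$ is the poset of trees $p\subseteq\omega^{<\omega}$ such that: for all $t\in p$ and $l\in\mathrm{dom}(t)$, $t(l)<h(l)$; every $t\in p$ has either exactly one or exactly $h(l(t))$ immediate successors in $p$ (where $l(t)$ is the length of $t$); and every $t\in p$ has an extension $t'\in p$ with $h(l(t'))$ immediate successors in $p$. The order is inclusion. A forcing notion $\mathbb P$ is Cohen preserving if for every $p\in\mathbb P$ and every $\mathbb P$-name $\dot D$ with $p\Vdash$ ''$\dot D\subseteq 2^{<\omega}$ is dense open'', there are a dense set $E\subseteq 2^{<\omega}$ in the ground model and $q\le p$ with $q\Vdash \check E\subseteq\dot D$. *)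

(* Defs.v *)
From Stdlib Require Import List Arith.
Import ListNotations.

(** Sequences: ω^{<ω} = list nat, 2^{<ω} = list bool; s ⊆ t (t extends s). *)
Definition prefix {A : Type} (s t : list A) : Prop := exists u, t = s ++ u.

(** A P-name for a subset of the ground-model set 2^{<ω} is (up to the
    standard equivalence) a set of pairs (š, r); we represent it as a relation
    [N : list bool -> P -> Prop] with [N s r] meaning (š, r) ∈ Ḋ. *)
Section Forcing.
Variables (P : Type) (le : P -> P -> Prop).

Definition name := list bool -> P -> Prop.

(** r ⊩ š ∈ Ḋ  iff the set of r' with r' ≤ r'' for some (š, r'') ∈ Ḋ is
    dense below r (ground equality of check names). *)
Definition forces_mem (N : name) (r : P) (s : list bool) : Prop :=
  forall r1, le r1 r -> exists r2, le r2 r1 /\ exists r3, le r2 r3 /\ N s r3.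

(** p ⊩ "Ḋ ⊆ 2^{<ω} is dense open", unfolded through the forcing clauses
    (quantifiers range over 2^{<ω}, which is absolute). *)
Definition forces_dense_open (N : name) (p : P) : Prop :=
  (forall s t r, prefix s t -> le r p -> forces_mem N r s -> forces_mem N r t)
  /\ (forall s r, le r p ->
        exists r', le r' r /\ exists t, prefix s t /\ forces_mem N r' t).

Definition dense_seq (E : list bool -> Prop) : Prop :=
  forall s, exists t, prefix s t /\ E t.

Definition cohen_preserving : Prop :=
  forall (p : P) (N : name), forces_dense_open N p ->
    exists E : list bool -> Prop, dense_seq E /\
      exists q, le q p /\ forall s, E s -> forces_mem N q s.

End Forcing.

Definition PT_tree (h : nat -> nat) (p : list nat -> Prop) : Prop :=
  p [] /\ (forall s u, p (s ++ u) -> p s) /\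
  (forall t, p t -> forall l, l < length t -> nth l t 0 < h l) /\
  (* exactly one, or exactly h(|t|) immediate successors (all of them, as
     successors t^i satisfy i < h(|t|)) *)
  (forall t, p t ->
     (exists! i, p (t ++ [i])) \/
     (forall i, p (t ++ [i]) <-> i < h (length t))) /\
  (forall t, p t -> exists u, p (t ++ u) /\
     forall i, p ((t ++ u) ++ [i]) <-> i < h (length (t ++ u))).

Record PT (h : nat -> nat) : Type := MkPT {
  tree : list nat -> Prop;
  tree_ok : PT_tree h tree }.

Definition PT_le (h : nat -> nat) (q p : PT h) : Prop :=
  forall t, tree h q t -> tree h p t.

(* Main.v *)
Require Import Defs.
From Stdlib Require Import List Arith PArith Lia ClassicalEpsilon Classical.
Import ListNotations.

Lemma prefix_refl {A} (s : list A) : prefix s s.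
Proof. exists []. now rewrite app_nil_r. Qed.
Lemma prefix_app {A} (s u : list A) : prefix s (s ++ u).
Proof. now exists u. Qed.
Lemma prefix_trans {A} (a b c : list A) : prefix a b -> prefix b c -> prefix a c.
Proof. intros [u ->] [v ->]. exists (u ++ v). now rewrite app_assoc. Qed.
Lemma prefix_len {A} (a b : list A) : prefix a b -> length a <= length b.
Proof. intros [u ->]. rewrite length_app. lia. Qed.
Lemma prefix_firstn {A} (a w : list A) : prefix a w -> a = firstn (length a) w.
Proof. intros [u ->]. rewrite firstn_app, Nat.sub_diag, firstn_O, app_nil_r, firstn_all. reflexivity. Qed.
Lemma prefix_of_firstn {A} n (w : list A) : prefix (firstn n w) w.
Proof. exists (skipn n w). now rewrite firstn_skipn. Qed.
Lemma prefix_comp {A} (a b w : list A) : prefix a w -> prefix b w -> length a <= length b -> prefix a b.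
Proof.
  intros Ha Hb Hl. apply prefix_firstn in Ha. apply prefix_firstn in Hb.
  assert (E: firstn (length a) w = firstn (length a) (firstn (length b) w))
    by (rewrite firstn_firstn; f_equal; lia).
  rewrite Ha, Hb, E. apply prefix_of_firstn.
Qed.
Lemma prefix_eq {A} (a b : list A) : prefix a b -> length a = length b -> a = b.
Proof. intros [u ->] Hl. rewrite length_app in Hl. destruct u; [now rewrite app_nil_r | simpl in Hl; lia]. Qed.
Lemma prefix_snoc {A} (s t : list A) i : prefix s (t ++ [i]) -> ~ prefix s t -> s = t ++ [i].
Proof.
  intros H1 H2. destruct (le_lt_dec (length s) (length t)).
  - exfalso. apply H2. apply (prefix_comp s t (t ++ [i])); auto. apply prefix_app.
  - apply prefix_eq; auto. apply prefix_len in H1. rewrite length_app in *. simpl in *. lia.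
Qed.
Lemma prefix_cases {A} (a b w : list A) : prefix a w -> prefix b w -> prefix a b \/ prefix b a.
Proof. intros. destruct (le_lt_dec (length a) (length b));
  [left; apply (prefix_comp a b w) | right; apply (prefix_comp b a w)]; auto; lia. Qed.
Lemma snoc_comp (t u : list nat) i : prefix t u -> t <> u ->
  ((prefix (t++[i]) u \/ prefix u (t++[i])) <-> i = nth (length t) u 0).
Proof.
  intros [v ->] Hne. destruct v as [|j v]; [rewrite app_nil_r in Hne; contradiction|].
  rewrite nth_middle. split.
  - intros [[x Hx]|[x Hx]].
    + rewrite <- app_assoc in Hx. apply app_inv_head in Hx. simpl in Hx. injection Hx; auto.
    + rewrite <- app_assoc in Hx. apply app_inv_head in Hx. simpl in Hx. injection Hx; auto.
  - intros ->. left. exists v. rewrite <- app_assoc. reflexivity.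
Qed.
Section PTsec.
Variables (h : nat -> nat) (Hh : forall n, 1 < h n).

Definition splitting (P : list nat -> Prop) u := forall i, P (u ++ [i]) <-> i < h (length u).
Definition succ_ok (P : list nat -> Prop) t :=
  (exists! i, P (t ++ [i])) \/ (forall i, P (t ++ [i]) <-> i < h (length t)).

Lemma succ_transfer (P Q : list nat -> Prop) t :
  (forall i, Q (t++[i]) <-> P (t++[i])) -> succ_ok P t -> succ_ok Q t.
Proof.
  intros E [[i [Hi Hu]]|H].
  - left; exists i; split; [apply E; auto| intros j Hj; apply Hu, E, Hj].
  - right; intro i; rewrite E; apply H.
Qed.

Lemma split_transfer (P Q : list nat -> Prop) t :
  (forall i, Q (t++[i]) <-> P (t++[i])) -> splitting P t -> splitting Q t.
Proof. intros E H i. rewrite E. apply H. Qed.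

Lemma tr_root (c : PT h) : tree h c [].
Proof. destruct c as [T HT]; simpl; destruct HT as [H _]; exact H. Qed.
Lemma tr_pref (c : PT h) s t : prefix s t -> tree h c t -> tree h c s.
Proof. destruct c as [T HT]; simpl; destruct HT as [_ [H _]]. intros [u ->]. apply H. Qed.
Lemma tr_bound (c : PT h) t : tree h c t -> forall l, l < length t -> nth l t 0 < h l.
Proof. destruct c as [T HT]; simpl; destruct HT as [_ [_ [H _]]]; exact (H t). Qed.
Lemma tr_succ (c : PT h) t : tree h c t -> succ_ok (tree h c) t.
Proof. destruct c as [T HT]; simpl; destruct HT as [_ [_ [_ [H _]]]]; exact (H t). Qed.
Lemma tr_split (c : PT h) t : tree h c t -> exists u, tree h c (t++u) /\ splitting (tree h c) (t++u).
Proof. destruct c as [T HT]; simpl; destruct HT as [_ [_ [_ [_ H]]]]; exact (H t). Qed.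

Lemma tr_ext (c : PT h) t k : tree h c t -> exists v, length v = k /\ tree h c (t ++ v).
Proof.
  intro Ht. induction k as [|k [v [Hl Hv]]].
  - exists []. rewrite app_nil_r. auto.
  - destruct (tr_succ c _ Hv) as [[i [Hi _]]|H].
    + exists (v ++ [i]). rewrite length_app, app_assoc; simpl. split; [lia|auto].
    + exists (v ++ [0]). rewrite length_app, app_assoc; simpl. split; [lia|]. apply H. specialize (Hh (length (t ++ v))). lia.
Qed.

Lemma PT_le_refl (c : PT h) : PT_le h c c.
Proof. intros t H; exact H. Qed.
Lemma PT_le_trans (a b c : PT h) : PT_le h a b -> PT_le h b c -> PT_le h a c.
Proof. intros H1 H2 t H. apply H2, H1, H. Qed.

Definition restr (c : PT h) u := fun t => tree h c t /\ (prefix t u \/ prefix u t).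

Lemma restr_above (c : PT h) u x : prefix u x -> (restr c u x <-> tree h c x).
Proof. intros H. unfold restr. split; [tauto| intro; split; auto]. Qed.

Lemma restr_split (c : PT h) u x : prefix u x -> tree h c x -> splitting (tree h c) x ->
  restr c u x /\ splitting (restr c u) x.
Proof.
  intros Hux Hx Hs. split; [apply restr_above; auto|].
  apply split_transfer with (P := tree h c); auto.
  intro i. apply restr_above. eapply prefix_trans; [exact Hux| apply prefix_app].
Qed.

Lemma restrict_ok (c : PT h) u : tree h c u -> PT_tree h (restr c u).
Proof.
  intro Hu. unfold PT_tree. split; [|split; [|split; [|split]]].
  - split; [apply tr_root|]. left. exists u. reflexivity.
  - intros s w [H1 H2]. split.
    + apply tr_pref with (s++w); [apply prefix_app|auto].
    + destruct H2 as [H2|H2].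
      * left; eapply prefix_trans; [apply prefix_app | exact H2].
      * apply (prefix_cases s u (s ++ w)); [apply prefix_app | exact H2].
  - intros t [Ht _]. apply (tr_bound c); auto.
  - intros t [Ht Hc]. fold (succ_ok (restr c u) t).
    destruct (classic (prefix u t)) as [Hut|Hut].
    + apply succ_transfer with (P := tree h c); [|apply tr_succ; auto].
      intro i. apply restr_above. eapply prefix_trans; [exact Hut| apply prefix_app].
    + destruct Hc as [Hc|Hc]; [|contradiction].
      assert (Hne : t <> u) by (intro; subst; apply Hut, prefix_refl).
      left. exists (nth (length t) u 0). split.
      * split; [|apply snoc_comp; auto].
        apply tr_pref with u; auto. destruct (proj2 (snoc_comp t u _ Hc Hne) eq_refl) as [H|H]; auto.
        assert (length t < length u).
        { destruct (Nat.eq_dec (length t) (length u)); [|apply prefix_len in Hc; lia].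
          destruct Hne. apply prefix_eq; auto. }
        set (i := nth (length t) u 0) in *. clearbody i.
        rewrite (prefix_eq _ _ H); [apply prefix_refl|]. apply prefix_len in H.
        rewrite length_app in *; simpl in *; lia.
      * intros j [_ Hj]. symmetry. apply (snoc_comp t u j Hc Hne). exact Hj.
  - intros t [Ht Hc].
    destruct (classic (prefix u t)) as [Hut|Hut].
    + destruct (tr_split c t Ht) as [v [Hv Hs]]. exists v.
      apply restr_split; auto. eapply prefix_trans; [exact Hut|apply prefix_app].
    + destruct Hc as [[w Hw]|Hc]; [|contradiction]. subst u.
      destruct (tr_split c (t++w) Hu) as [v [Hv Hs]]. exists (w ++ v).
      rewrite app_assoc. apply restr_split; auto. apply prefix_app.
Qed.

Definition restrict (c : PT h) u (Hu : tree h c u) : PT h := MkPT h _ (restrict_ok c u Hu).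

Lemma restrict_le (c : PT h) u Hu : PT_le h (restrict c u Hu) c.
Proof. intros t [H _]; exact H. Qed.

Definition graftP (c r : PT h) σ := fun t => (prefix σ t /\ tree h r t) \/ (~ prefix σ t /\ tree h c t).

Section Graft.
Variables (c r : PT h) (σ : list nat) (Hle : PT_le h r c) (Hσ : tree h r σ).

Lemma graft_above x : prefix σ x -> (graftP c r σ x <-> tree h r x).
Proof. intro H. unfold graftP. split; [intros [[_ ?]|[? _]]; [auto|contradiction] | intro; left; auto]. Qed.

Lemma graft_succ_eq t : ~ prefix σ t -> forall i, graftP c r σ (t++[i]) <-> tree h c (t++[i]).
Proof.
  intros Ht i. unfold graftP. destruct (classic (prefix σ (t++[i]))) as [H|H].
  - pose proof (prefix_snoc _ _ _ H Ht) as E. rewrite <- E. split.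
    + intros [[_ ?]|[_ ?]]; auto.
    + intro; left; split; auto. apply prefix_refl.
  - split; [intros [[? _]|[_ ?]]; [contradiction|auto] | intro; right; auto].
Qed.

Lemma graft_sub x : graftP c r σ x -> tree h c x.
Proof. intros [[_ H]|[_ H]]; auto. Qed.

Lemma graft_above_split x : prefix σ x -> tree h r x -> splitting (tree h r) x ->
  graftP c r σ x /\ splitting (graftP c r σ) x.
Proof.
  intros H1 H2 H3. split; [apply graft_above; auto|].
  apply split_transfer with (P := tree h r); auto.
  intro i. apply graft_above. eapply prefix_trans; [exact H1|apply prefix_app].
Qed.

Lemma graft_ok : PT_tree h (graftP c r σ).
Proof.
  unfold PT_tree. split; [|split; [|split; [|split]]].
  - destruct (classic (prefix σ [])); [left|right]; split; auto; apply tr_root.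
  - intros s w [[H1 H2]|[H1 H2]].
    + assert (tree h r s) by (apply tr_pref with (s++w); [apply prefix_app|auto]).
      destruct (classic (prefix σ s)); [left|right]; split; auto.
    + right. split.
      * intro; apply H1; eapply prefix_trans; [eauto|apply prefix_app].
      * apply tr_pref with (s++w); [apply prefix_app|auto].
  - intros t Ht. apply tr_bound with c. apply graft_sub; auto.
  - intros t [[H1 H2]|[H1 H2]]; fold (succ_ok (graftP c r σ) t).
    + apply succ_transfer with (P := tree h r); [|apply tr_succ; auto].
      intro i. apply graft_above. eapply prefix_trans; [exact H1|apply prefix_app].
    + apply succ_transfer with (P := tree h c); [|apply tr_succ; auto].
      apply graft_succ_eq; auto.
  - intros t [[H1 H2]|[H1 H2]].
    + destruct (tr_split r t H2) as [v [Hv Hs]]. exists v.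
      apply graft_above_split; auto. eapply prefix_trans; [exact H1|apply prefix_app].
    + destruct (tr_split c t H2) as [v [Hv Hs]].
      destruct (classic (prefix σ (t++v))) as [Hσv|Hσv].
      * destruct (prefix_cases t σ (t++v) (prefix_app _ _) Hσv) as [[w Hw]|Hts]; [|contradiction].
        destruct (tr_split r σ Hσ) as [v' [Hv' Hs']]. exists (w ++ v').
        rewrite app_assoc, <- Hw. apply graft_above_split; auto. apply prefix_app.
      * exists v. split; [right; auto|].
        apply split_transfer with (P := tree h c); auto. apply graft_succ_eq; auto.
Qed.

Definition graft : PT h := MkPT h _ graft_ok.

Lemma graft_le : PT_le h graft c.
Proof. intros t H. apply graft_sub; exact H. Qed.

End Graft.
End PTsec.

Fixpoint seqs (h : nat -> nat) (n off : nat) : list (list nat) :=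
  match n with
  | 0 => [[]]
  | S n => flat_map (fun i => map (cons i) (seqs h n (S off))) (seq 0 (h off))
  end.

Lemma seqs_complete h σ : forall n off, length σ = n ->
  (forall l, l < n -> nth l σ 0 < h (off + l)) -> In σ (seqs h n off).
Proof.
  induction σ as [|i σ IH]; intros n off Hl Hb; simpl in Hl; subst n; simpl.
  - auto.
  - apply in_flat_map. exists i. split.
    + apply in_seq. specialize (Hb 0). rewrite Nat.add_0_r in Hb. simpl in Hb. lia.
    + apply in_map. apply IH; auto. intros l Hl. specialize (Hb (S l)). simpl in Hb.
      replace (S off + l) with (off + S l) by lia. apply Hb. lia.
Qed.

Section Forc.
Variables (h : nat -> nat) (Hh : forall n, 1 < h n).
Variables (p : PT h) (N : name (PT h)).
Hypothesis HD : forces_dense_open (PT h) (PT_le h) N p.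

Notation F := (forces_mem (PT h) (PT_le h) N).

Lemma fm_mono (r r' : PT h) t : PT_le h r' r -> F r t -> F r' t.
Proof. intros H Hf r1 H1. apply Hf. eapply PT_le_trans; eauto. Qed.

Definition Gd (c : PT h) σ t := forall r : PT h, PT_le h r c ->
  (forall x, tree h r x -> prefix x σ \/ prefix σ x) -> F r t.
Definition Sp L (c : PT h) σ M := forall w, tree h c w -> M <= length w -> prefix σ w ->
  exists u, prefix u w /\ L <= length u /\ length u < M /\ splitting h (tree h c) u.

Section Inner.
Variables (c : PT h) (L : nat) (s : list bool) (Hcp : PT_le h c p).

Definition Inv (cur : PT h) t M D :=
  PT_le h cur c /\ (forall x, length x <= L -> (tree h cur x <-> tree h c x)) /\ L < M /\
  prefix s t /\
  forall σ, In σ D -> tree h cur σ -> length σ = L -> Gd cur σ t /\ Sp L cur σ M.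

Lemma inv_step cur t M D a : Inv cur t M D -> exists cur' t' M', Inv cur' t' M' (D ++ [a]).
Proof.
  intros (Hc & Hag & HLM & Hst & Hold).
  destruct (classic (tree h cur a /\ length a = L)) as [[Ha Hal]|Hn].
  2:{ exists cur, t, M. split; [|split; [|split; [|split]]]; auto.
      intros σ Hin H1 H2. apply in_app_or in Hin. destruct Hin as [Hin|[<-|[]]]; auto.
      exfalso; auto. }
  assert (Hcurp : PT_le h cur p) by (eapply PT_le_trans; eauto).
  set (r := restrict h cur a Ha).
  assert (Hrp : PT_le h r p) by (eapply PT_le_trans; [apply restrict_le|exact Hcurp]).
  destruct HD as [HD1 HD2].
  destruct (HD2 t r Hrp) as [r0 [Hr0 [t' [Htt' Hf]]]].
  assert (Ha0 : tree h r0 a).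
  { destruct (tr_ext h Hh r0 [] (length a) (tr_root h r0)) as [x [Hxl Hx]]. simpl in Hx.
    destruct (Hr0 x Hx) as [_ [Hxa|Hxa]]; apply prefix_eq in Hxa; auto; subst; auto. }
  destruct (tr_split h r0 a Ha0) as [v [Hv Hs]].
  set (u := a ++ v) in *.
  set (r' := restrict h r0 u Hv).
  assert (Hf' : F r' t') by (eapply fm_mono; [apply restrict_le|exact Hf]).
  assert (Hr'cur : PT_le h r' cur).
  { intros x Hx. apply (restrict_le h cur a Ha). apply Hr0. apply (restrict_le h r0 u Hv). exact Hx. }
  assert (Har' : tree h r' a) by (split; auto; left; apply prefix_app).
  set (cur' := graft h cur r' a Hr'cur Har').
  assert (Hc'c : PT_le h cur' cur) by apply graft_le.
  exists cur', t', (Nat.max M (S (length u))).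
  split; [|split; [|split; [|split]]].
  - eapply PT_le_trans; eauto.
  - intros x Hx. rewrite <- Hag; auto. split; [apply Hc'c|].
    intro Hcx. destruct (classic (prefix a x)) as [Hax|Hax].
    + assert (x = a) by (symmetry; apply prefix_eq; auto; apply prefix_len in Hax; lia).
      subst x. left. split; auto.
    + right; auto.
  - lia.
  - eapply prefix_trans; eauto.
  - intros σ Hin H1 H2. destruct (classic (σ = a)) as [->|Hne].
    + split.
      * intros r1 Hr1 Hcmp. apply fm_mono with r'; auto.
        intros x Hx. destruct (Hcmp x Hx) as [Hxa|Hax].
        -- apply tr_pref with a; auto.
        -- destruct (Hr1 x Hx) as [[_ ?]|[? _]]; [auto|contradiction].
      * intros w Hw HM Haw. destruct Hw as [[_ Hw]|[? _]]; [|contradiction].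
        destruct Hw as [Hw0 [Hwu|Huw]].
        { apply prefix_len in Hwu. lia. }
        exists u. split; auto. split; [unfold u; rewrite length_app; lia|]. split; [lia|].
        intro i. change (tree h cur' (u ++ [i])) with (graftP h cur r' a (u ++ [i])).
        rewrite graft_above by (eapply prefix_trans; [apply prefix_app|apply prefix_app]).
        change (tree h r' (u ++ [i])) with (restr h r0 u (u ++ [i])).
        rewrite restr_above by apply prefix_app. apply Hs.
    + apply in_app_or in Hin. destruct Hin as [Hin|[Heq|[]]]; [|congruence].
      destruct (Hold σ Hin (Hc'c σ H1) H2) as [HG HS]. split.
      * intros r1 Hr1 Hcmp. apply (HD1 t t' r1 Htt').
        -- eapply PT_le_trans; [exact Hr1|]. eapply PT_le_trans; eauto.
        -- apply HG; auto. eapply PT_le_trans; eauto.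
      * intros w Hw HM Hσw.
        destruct (HS w (Hc'c w Hw) ltac:(lia) Hσw) as [u0 [Hu0w [HLu0 [Hu0M Hsp]]]].
        exists u0. split; auto. split; auto. split; [lia|].
        assert (Hnau : ~ prefix a u0).
        { intro Hau. apply Hne. assert (Hσu0 : prefix σ u0) by (apply (prefix_comp σ u0 w); auto; lia).
          symmetry. apply prefix_eq; [apply (prefix_comp a σ u0)|]; auto; lia. }
        apply split_transfer with (P := tree h cur); auto.
        intro i. change (tree h cur' (u0 ++ [i])) with (graftP h cur r' a (u0 ++ [i])). eapply graft_succ_eq; eauto.
Qed.

Lemma inv_loop ls : forall D cur t M, Inv cur t M D -> exists cur' t' M', Inv cur' t' M' (D ++ ls).
Proof.
  induction ls as [|a ls IH]; intros D cur t M H.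
  - rewrite app_nil_r. eauto.
  - destruct (inv_step cur t M D a H) as [c1 [t1 [M1 H1]]].
    destruct (IH _ _ _ _ H1) as [c2 [t2 [M2 H2]]]. rewrite <- app_assoc in H2. eauto.
Qed.

Lemma outer : exists c' L' t, PT_le h c' c /\ L < L' /\ prefix s t /\
  (forall x, length x <= L -> (tree h c' x <-> tree h c x)) /\
  (forall σ, tree h c' σ -> length σ = L -> Gd c' σ t /\ Sp L c' σ L').
Proof.
  destruct (inv_loop (seqs h L 0) [] c s (S L)) as [c' [t' [M' (H1 & H2 & H3 & H4 & H5)]]].
  { split; [apply PT_le_refl|]. split; [tauto|]. split; [lia|]. split; [apply prefix_refl|].
    intros _ []. }
  exists c', M', t'. split; [auto|]. split; [auto|]. split; [auto|]. split; [auto|].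
  intros σ Hσ Hl. apply H5; auto. apply seqs_complete; auto. intros l Hl'.
  apply (tr_bound h c); auto. lia.
Qed.
End Inner.

Fixpoint pos2l (x : positive) : list bool :=
  match x with xH => [] | xO y => false :: pos2l y | xI y => true :: pos2l y end.
Fixpoint l2pos (s : list bool) : positive :=
  match s with [] => xH | b :: s => if b then xI (l2pos s) else xO (l2pos s) end.
Lemma pos2l_l2pos s : pos2l (l2pos s) = s.
Proof. induction s as [|[|] s IH]; simpl; congruence. Qed.
Definition enum n := pos2l (Pos.of_succ_nat n).
Lemma enum_surj s : exists n, enum n = s.
Proof.
  exists (pred (Pos.to_nat (l2pos s))). unfold enum.
  rewrite (SuccNat2Pos.inv _ (l2pos s)); [apply pos2l_l2pos|].
  pose proof (Pos2Nat.is_pos (l2pos s)). lia.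
Qed.

Definition stepP (x : PT h * nat) (sn : list bool) (y : PT h * nat * list bool) : Prop :=
  PT_le h (fst x) p ->
  PT_le h (fst (fst y)) (fst x) /\ snd x < snd (fst y) /\ prefix sn (snd y) /\
  (forall z, length z <= snd x -> (tree h (fst (fst y)) z <-> tree h (fst x) z)) /\
  (forall σ, tree h (fst (fst y)) σ -> length σ = snd x ->
     Gd (fst (fst y)) σ (snd y) /\ Sp (snd x) (fst (fst y)) σ (snd (fst y))).

Definition stepF x sn := epsilon (inhabits (p, 0, @nil bool)) (stepP x sn).

Lemma stepF_spec x sn : stepP x sn (stepF x sn).
Proof.
  unfold stepF. apply epsilon_spec. destruct (classic (PT_le h (fst x) p)) as [H|H].
  - destruct (outer (fst x) (snd x) sn H) as [c' [L' [t Hp]]].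
    exists (c', L', t). intros _. exact Hp.
  - exists (p, 0, []). intro; contradiction.
Qed.

Fixpoint st n : PT h * nat * list bool :=
  match n with 0 => (p, 0, []) | S n => stepF (fst (st n)) (enum n) end.
Definition Pn n := fst (fst (st n)).
Definition Ln n := snd (fst (st n)).
Definition tn n := snd (st (S n)).

Lemma spec0 n : stepP (fst (st n)) (enum n) (st (S n)).
Proof. apply stepF_spec. Qed.

Lemma Pn_p n : PT_le h (Pn n) p.
Proof.
  induction n as [|n IH]; [apply PT_le_refl|].
  destruct (spec0 n IH) as [H _]. eapply PT_le_trans; eauto.
Qed.

Lemma spec n :
  PT_le h (Pn (S n)) (Pn n) /\ Ln n < Ln (S n) /\ prefix (enum n) (tn n) /\
  (forall z, length z <= Ln n -> (tree h (Pn (S n)) z <-> tree h (Pn n) z)) /\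
  (forall σ, tree h (Pn (S n)) σ -> length σ = Ln n ->
     Gd (Pn (S n)) σ (tn n) /\ Sp (Ln n) (Pn (S n)) σ (Ln (S n))).
Proof. exact (spec0 n (Pn_p n)). Qed.

Lemma Ln_ge n : n <= Ln n.
Proof. induction n as [|n IH]; [lia|]. destruct (spec n) as [_ [H _]]. lia. Qed.

Lemma Ln_mono n k : Ln n <= Ln (n + k).
Proof. induction k as [|k IH]; [rewrite Nat.add_0_r; lia|].
  rewrite Nat.add_succ_r. destruct (spec (n + k)) as [_ [H _]]. lia. Qed.

Lemma Pn_mono n k : PT_le h (Pn (n + k)) (Pn n).
Proof. induction k as [|k IH]; [rewrite Nat.add_0_r; apply PT_le_refl|].
  rewrite Nat.add_succ_r. destruct (spec (n + k)) as [H _]. eapply PT_le_trans; eauto. Qed.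

Lemma Pn_agree n k x : length x <= Ln n -> (tree h (Pn (n + k)) x <-> tree h (Pn n) x).
Proof. intro Hx. induction k as [|k IH]; [rewrite Nat.add_0_r; tauto|].
  rewrite Nat.add_succ_r. destruct (spec (n + k)) as [_ [_ [_ [H _]]]].
  rewrite H; auto. pose proof (Ln_mono n k). lia. Qed.

Definition Q x := forall n, tree h (Pn n) x.

Lemma Q_agree n x : length x <= Ln n -> (Q x <-> tree h (Pn n) x).
Proof.
  intro Hx. split; [intro H; apply H|]. intros H m.
  destruct (le_lt_dec n m).
  - replace m with (n + (m - n)) by lia. apply Pn_agree; auto.
  - assert (E : n = m + (n - m)) by lia. rewrite E in H. apply Pn_mono in H. exact H.
Qed.

Lemma Q_ok : PT_tree h Q.
Proof.
  unfold PT_tree. split; [|split; [|split; [|split]]].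
  - intro n. apply tr_root.
  - intros s w H n. apply tr_pref with (s ++ w); [apply prefix_app|apply H].
  - intros t Ht. apply (tr_bound h (Pn 0)). apply Ht.
  - intros t Ht. fold (succ_ok h Q t).
    set (n := S (length t)). pose proof (Ln_ge n).
    apply succ_transfer with (P := tree h (Pn n)); [|apply tr_succ; apply Ht].
    intro i. apply Q_agree. rewrite length_app. simpl. unfold n in *. lia.
  - intros t Ht. set (n := length t). pose proof (Ln_ge n).
    destruct (spec n) as [_ [HL [_ [_ HGS]]]].
    destruct (tr_ext h Hh (Pn (S n)) t (Ln (S n) - length t) (Ht (S n))) as [v [Hvl Hv]].
    set (w := t ++ v) in *.
    assert (Hwl : length w = Ln (S n)) by (unfold w; rewrite length_app; unfold n in *; lia).
    set (σ := firstn (Ln n) w).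
    assert (Hσ : tree h (Pn (S n)) σ) by (apply tr_pref with w; [apply prefix_of_firstn|auto]).
    assert (Hσl : length σ = Ln n) by (unfold σ; rewrite length_firstn; lia).
    destruct (HGS σ Hσ Hσl) as [_ HS].
    destruct (HS w Hv ltac:(lia) (prefix_of_firstn _ _)) as [u [Huw [HLu [HuM Hsp]]]].
    assert (Htu : prefix t u) by (apply (prefix_comp t u w); [apply prefix_app|auto|unfold n in *; lia]).
    destruct Htu as [v' ->]. exists v'. split.
    + apply (Q_agree (S n)); [lia|]. apply tr_pref with w; auto.
    + apply split_transfer with (P := tree h (Pn (S n))); auto.
      intro i. apply Q_agree. rewrite length_app. simpl. lia.
Qed.

Definition qPT : PT h := MkPT h Q Q_ok.

Lemma main_result : exists E : list bool -> Prop, dense_seq E /\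
      exists q, PT_le h q p /\ forall s, E s -> F q s.
Proof.
  exists (fun t => exists n, t = tn n). split.
  - intro s. destruct (enum_surj s) as [n <-]. exists (tn n). split; [|eauto].
    destruct (spec n) as [_ [_ [H _]]]. exact H.
  - exists qPT. split; [intros x Hx; apply (Hx 0)|].
    intros s [n ->] r1 Hr1.
    destruct (tr_ext h Hh r1 [] (Ln n) (tr_root h r1)) as [σ [Hσl Hσ]]. simpl in Hσ.
    set (r := restrict h r1 σ Hσ).
    assert (Hrq : PT_le h r (Pn (S n))).
    { intros x Hx. apply (restrict_le h r1 σ Hσ), Hr1 in Hx. apply Hx. }
    destruct (spec n) as [_ [_ [_ [_ HGS]]]].
    destruct (HGS σ (Hrq σ (conj Hσ (or_introl (prefix_refl σ)))) Hσl) as [HG _].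
    assert (Fr : F r (tn n)).
    { apply HG; auto. intros x [_ Hx]. exact Hx. }
    destruct (Fr r (PT_le_refl h r)) as [r2 [Hr2 Hr3]].
    exists r2. split; auto. eapply PT_le_trans; [exact Hr2|apply restrict_le].
Qed.

End Forc.

Theorem lemma3p4 (h : nat -> nat) (Hh : forall n, 1 < h n) :
  cohen_preserving (PT h) (@PT_le h).
Proof.
  intros p N HD. exact (main_result h Hh p N HD).
Qed.
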